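(* For every prime power $q$, all integers $n$, $r\le\lfloor n/2\rfloor$ and $0<\rho<r$, $$K_{\mathrm{C}}(q,n,r,\rho)\le\binom{n}{r}K_{\mathrm{R}}(q^{n-r},r,\rho).$$
   Context: $E_r(q,n)$ is the set of $r$-dimensional subspaces of $\mathrm{GF}(q)^n$ with injection distance $d_{\mathrm{I}}(U,V)=\dim(U+V)-\min\{\dim U,\dim V\}$; the covering radius of a nonempty $\mathcal{C}\subseteq E_r(q,n)$ is $\max_U\min_{C\in\mathcal{C}}d_{\mathrm{I}}(U,C)$, and $K_{\mathrm{C}}(q,n,r,\rho)$ is the minimum cardinality of a subset of $E_r(q,n)$ with covering radius at most $\rho$. The rank distance on $\mathrm{GF}(q)^{m\times N}$ is $d_{\mathrm{R}}({\bf C},{\bf D})=\mathrm{rk}({\bf C}-{\bf D})$; $K_{\mathrm{R}}(q^m,N,\rho)$ is the minimum cardinality of a set $\mathcal{C}\subseteq\mathrm{GF}(q)^{m\times N}$ such that every matrix in $\mathrm{GF}(q)^{m\times N}$ is within rank distance $\rho$ of some element of $\mathcal{C}$. *)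

(* Defs.v *)
From HB Require Import structures.
From mathcomp Require Import all_boot all_order all_algebra all_field.

Set Implicit Arguments. Unset Strict Implicit. Unset Printing Implicit Defensive.
Import GRing.Theory.
Local Open Scope ring_scope.

(* Subspaces of F^n are represented canonically by square matrices A with
   <<A>>%MS = A (their row space is the subspace).  This gives a finite type. *)
Definition is_subspace_mx (F : fieldType) (n : nat) (A : 'M[F]_n) : bool :=
  (<<A>>%MS == A).

Definition Er (F : finFieldType) (n r : nat) : {set 'M[F]_n} :=
  [set A : 'M[F]_n | is_subspace_mx A && (\rank A == r)%N].

Definition dI (F : fieldType) (n : nat) (U V : 'M[F]_n) : nat :=
  (\rank (U + V)%MS - minn (\rank U) (\rank V))%N.

Definition subspace_covering (F : finFieldType) (n r rho : nat)
    (C : {set 'M[F]_n}) : bool :=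
  [&& C \subset Er F n r, C != set0 &
      [forall U in Er F n r, exists D in C, (dI U D <= rho)%N]].

Definition K_C (F : finFieldType) (n r rho : nat) : nat :=
  \big[minn/#|Er F n r|]_(C : {set 'M[F]_n} | subspace_covering r rho C) #|C|.

Definition rank_covering (F : finFieldType) (m N rho : nat)
    (C : {set 'M[F]_(m, N)}) : bool :=
  [forall A : 'M[F]_(m, N), exists D in C, (\rank (A - D)%R <= rho)%N].

Definition K_R (F : finFieldType) (m N rho : nat) : nat :=
  \big[minn/#|'M[F]_(m, N)|]_(C : {set 'M[F]_(m, N)} | rank_covering rho C) #|C|.

(* Main.v *)
Require Import Defs.
From mathcomp Require Import all_boot all_order all_algebra all_field zify.
Set Implicit Arguments. Unset Strict Implicit. Unset Printing Implicit Defensive.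
Import GRing.Theory.
Local Open Scope ring_scope.

Definition selmx (F : fieldType) n m (g : 'I_m -> 'I_n) : 'M[F]_(n, m) :=
  \matrix_(j, i) (j == g i)%:R.

Lemma selTsel (F : fieldType) n m p (g : 'I_m -> 'I_n) (h : 'I_p -> 'I_n) :
  (selmx F g)^T *m selmx F h = \matrix_(i, k) (g i == h k)%:R.
Proof.
apply/matrixP => i k; rewrite !mxE (bigD1 (g i)) //= big1 => [|j nj].
  by rewrite !mxE eqxx mul1r addr0.
by rewrite !mxE (negPf nj) mul0r.
Qed.

Lemma selselT (F : fieldType) n m (g : 'I_m -> 'I_n) : injective g ->
  selmx F g *m (selmx F g)^T = \matrix_(j, j') ((j == j') && (j \in codom g))%:R.
Proof.
move=> ig; apply/matrixP => j j'; rewrite !mxE.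
case: (boolP (j \in codom g)) => [/codomP [i0 ->]|nj].
  rewrite (bigD1 i0) //= big1 => [|i ni]; rewrite !mxE.
    by rewrite eqxx mul1r addr0 andbT eq_sym.
  by rewrite (inj_eq ig) [i0 == i]eq_sym (negPf ni) mul0r.
rewrite andbF big1 // => i _; rewrite !mxE.
case: eqP => [ej|]; last by rewrite mul0r.
by case/negP: nj; rewrite ej codom_f.
Qed.

Lemma selmul (F : fieldType) n n' m (U : 'M[F]_(n', n)) (g : 'I_m -> 'I_n) :
  (U *m selmx F g)^T = rowsub g U^T.
Proof.
apply/matrixP => i j; rewrite !mxE (bigD1 (g i)) //= big1 => [|k nk].
  by rewrite !mxE eqxx mulr1 addr0.
by rewrite !mxE (negPf nk) mulr0.
Qed.

Definition gS n (x0 : 'I_n) (S : {set 'I_n}) m (i : 'I_m) : 'I_n := nth x0 (enum S) i.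

Lemma gS_inj n x0 (S : {set 'I_n}) m : #|S| = m -> injective (@gS n x0 S m).
Proof.
move=> cS i j; rewrite /gS => /eqP; rewrite nth_uniq ?enum_uniq -?cardE ?cS //.
by move/eqP/val_inj.
Qed.

Lemma gS_codom n x0 (S : {set 'I_n}) m : #|S| = m -> codom (@gS n x0 S m) =i S.
Proof.
move=> cS x; apply/codomP/idP => [[i ->]|xS].
  by rewrite /gS -mem_enum mem_nth // -cardE cS.
have hx : (index x (enum S) < m)%N by rewrite -cS cardE index_mem mem_enum.
by exists (Ordinal hx); rewrite /gS nth_index // mem_enum.
Qed.

Lemma info_aux (F : fieldType) n (x0 : 'I_n) (U : 'M[F]_n) m (f : 'I_m -> 'I_n) r :
  m = r -> injective f -> \rank (rowsub f U^T) = m ->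
  exists S : {set 'I_n}, #|S| = r /\ \rank (U *m selmx F (@gS n x0 S r)) = r.
Proof.
move=> <- injf rkf; pose S := [set f i | i in 'I_m].
have cS : #|S| = m by rewrite card_imset // card_ord.
exists S; split => //; apply/eqP; rewrite eqn_leq rank_leq_col /=.
pose g := @gS n x0 S m.
have ig := @gS_inj n x0 S m cS; have cg := @gS_codom n x0 S m cS.
have e : selmx F f = selmx F g *m ((selmx F g)^T *m selmx F f).
  rewrite mulmxA selselT //; apply/matrixP => j i; rewrite !mxE.
  rewrite (bigD1 j) //= big1 => [|k nk]; rewrite !mxE.
    rewrite eqxx /=; case: eqP => [->|]; last by rewrite ?andbF ?mul0r ?mulr0 addr0.
    idtac.
    by rewrite cg imset_f // mul1r addr0.
  by rewrite eq_sym (negPf nk) mul0r.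
have h : \rank (U *m selmx F f) = m by rewrite -mxrank_tr selmul.
rewrite -{1}h e mulmxA; exact: mxrankM_maxl.
Qed.

Lemma info_set (F : fieldType) n (x0 : 'I_n) (U : 'M[F]_n) r : \rank U = r ->
  exists S : {set 'I_n}, #|S| = r /\ \rank (U *m selmx F (@gS n x0 S r)) = r.
Proof.
move=> rkU; apply: (@info_aux F n x0 U _ (maxrankfun U^T)).
- by rewrite mxrank_tr.
- exact: maxrankfun_inj.
- by rewrite eq_maxrowsub.
Qed.

Definition QS (F : fieldType) n (x0 : 'I_n) r (S : {set 'I_n}) : 'M[F]_(n, r) :=
  selmx F (@gS n x0 S r).
Definition QC (F : fieldType) n (x0 : 'I_n) r (S : {set 'I_n}) : 'M[F]_(n, n - r) :=
  selmx F (@gS n x0 (~: S) (n - r)).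
Definition Mw (F : fieldType) n (x0 : 'I_n) r (S : {set 'I_n}) (X : 'M[F]_(n - r, r))
  : 'M[F]_(r, n) := (QS F x0 r S)^T + X^T *m (QC F x0 r S)^T.

Section Props.
Variables (F : fieldType) (n : nat) (x0 : 'I_n) (r : nat) (S : {set 'I_n}).
Hypothesis cS : #|S| = r.

Let cSC : #|~: S| = (n - r)%N.
Proof. have := cardsC S; rewrite card_ord cS; lia. Qed.

Lemma QtQ : (QS F x0 r S)^T *m QS F x0 r S = 1%:M.
Proof.
rewrite selTsel; apply/matrixP => i k; rewrite !mxE (inj_eq (@gS_inj n x0 _ _ cS)).
by [].
Qed.

Lemma QCtQ : (QC F x0 r S)^T *m QS F x0 r S = 0.
Proof.
rewrite selTsel; apply/matrixP => i k; rewrite !mxE.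
case: eqP => // e; have := codom_f (@gS n x0 (~:S) (n - r)) i.
rewrite (@gS_codom n x0 _ _ cSC) e in_setC -(@gS_codom n x0 _ _ cS) codom_f.
by [].
Qed.

Lemma Qpart : QS F x0 r S *m (QS F x0 r S)^T + QC F x0 r S *m (QC F x0 r S)^T = 1%:M.
Proof.
rewrite !selselT ?(@gS_inj n x0 _ _ cS) //.
apply/matrixP => j j'; rewrite !mxE (@gS_codom n x0 _ _ cS) (@gS_codom n x0 _ _ cSC) in_setC.
  by case: (j == j'); case: (j \in S); rewrite ?addr0 ?add0r.
exact: (@gS_inj n x0 _ _ cSC).
exact: (@gS_inj n x0 _ _ cS).
Qed.

Lemma MwQ (X : 'M[F]_(n - r, r)) : Mw x0 S X *m QS F x0 r S = 1%:M.
Proof. by rewrite mulmxDl QtQ -mulmxA QCtQ mulmx0 addr0. Qed.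

Lemma rank_Mw (X : 'M[F]_(n - r, r)) : \rank (Mw x0 S X) = r.
Proof.
apply/eqP; rewrite eqn_leq rank_leq_row /=.
by rewrite -{1}(mxrank1 F r) -(MwQ X) mxrankM_maxl.
Qed.
End Props.

Lemma cover_U (F : fieldType) n (x0 : 'I_n) r (U : 'M[F]_n) : \rank U = r ->
  exists S : {set 'I_n}, #|S| = r /\
    exists Y : 'M[F]_(n - r, r), (U == Mw x0 S Y)%MS.
Proof.
move=> rkU; have [S [cS rk]] := info_set x0 rkU.
have : row_full (U *m QS F x0 r S) by rewrite /row_full /QS rk.
case/row_fullP => Z hZ; set B := Z *m U.
exists S; split => //; exists (B *m QC F x0 r S)^T.
have eB : B = Mw x0 S (B *m QC F x0 r S)^T.
  rewrite /Mw trmxK -[LHS]mulmx1 -(@Qpart F n x0 r S cS) mulmxDr !mulmxA.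
  by rewrite /B -(mulmxA Z U) hZ mul1mx.
rewrite -eB.
have rkB : \rank B = r.
  apply/eqP; rewrite eqn_leq rank_leq_row /=.
  by rewrite -{1}(mxrank1 F r) -hZ mulmxA mxrankM_maxl.
have := mxrank_leqif_eq (submxMl Z U); rewrite -/B rkB rkU => -[_ h].
by apply/eqmxP; apply: eqmx_sym; apply/eqmxP; rewrite -h.
Qed.

Lemma dI_bound (F : fieldType) n (x0 : 'I_n) r (U : 'M[F]_n) (S : {set 'I_n})
  (Y X : 'M[F]_(n - r, r)) : \rank U = r -> #|S| = r ->
  (U == Mw x0 S Y)%MS ->
  (\rank (U + <<Mw x0 S X>>)%MS - minn (\rank U) (\rank <<Mw x0 S X>>%MS)
     <= \rank (Y - X)%R)%N.
Proof.
move=> rkU cS hU.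
rewrite mxrank_gen rank_Mw // rkU minnn.
have -> : \rank (U + <<Mw x0 S X>>)%MS = \rank (Mw x0 S Y + Mw x0 S X)%MS.
  by apply: eqmx_rank; apply/eqmxP; apply: adds_eqmx; [apply/eqmxP | apply: genmxE].
set MY := Mw x0 S Y; set MX := Mw x0 S X.
have s1 : (MY + MX <= (MY - MX)%R + MX)%MS.
  rewrite addsmx_sub addsmxSr andbT.
  by rewrite -{1}(subrK MX MY) addmx_sub_adds.
have h1 := mxrankS s1.
have h2 := (mxrank_adds_leqif (MY - MX) MX).1.
have eD : MY - MX = (Y - X)^T *m (QC F x0 r S)^T.
  by rewrite /MY /MX /Mw opprD addrACA subrr add0r -mulmxBl linearB.
have h3 : (\rank (MY - MX)%R <= \rank (Y - X)%R)%N.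
  by rewrite eD -(mxrank_tr (Y - X)) mxrankM_maxl.
move: h1 h2 h3; rewrite rank_Mw //; lia.
Qed.
Local Close Scope ring_scope.

Lemma bigmin_le (I : finType) (P : pred I) (F : I -> nat) d j :
  P j -> \big[minn/d]_(i | P i) F i <= F j.
Proof.
move=> Pj; rewrite -big_filter.
have : j \in filter P (index_enum I) by rewrite mem_filter Pj mem_index_enum.
elim: (filter P _) => [//|x s IH]; rewrite inE big_cons => /predU1P [<-|js].
  exact: geq_minl.
exact: leq_trans (geq_minr _ _) (IH js).
Qed.

Theorem proposition12 (F : finFieldType) (n r rho : nat) :
  (r <= n./2)%N -> (0 < rho)%N -> (rho < r)%N ->
  (K_C F n r rho <= 'C(n, r) * K_R F (n - r) r rho)%N.
Proof.
move=> hr hrho hrr.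
have rn : r <= n by apply: leq_trans hr _; rewrite leq_half_double; lia.
have n0 : 0 < n by lia.
pose x0 : 'I_n := Ordinal n0.
have covT : rank_covering rho [set: 'M[F]_(n - r, r)].
  apply/forallP => A; apply/existsP; exists A; rewrite in_setT subrr mxrank0 /=.
  exact: leq0n.
have [R covR minR] := @arg_minnP _ [set: 'M[F]_(n - r, r)]
   (fun C => rank_covering rho C) (fun C => #|C|) covT.
have RK : #|R| <= K_R F (n - r) r rho.
  rewrite /K_R; apply: (big_ind (fun x => #|R| <= x)).
  - exact: max_card.
  - by move=> x y hx hy; rewrite leq_min hx hy.
  - exact: minR.
pose C := \bigcup_(S : {set 'I_n} | #|S| == r) [set <<Mw x0 S X>>%MS | X in R].
have cardC : #|C| <= 'C(n, r) * #|R|.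
  apply: (@leq_trans (\sum_(S : {set 'I_n} | #|S| == r) #|R|)).
    rewrite /C; elim/big_rec2: _ => [|S y x _ hx]; first by rewrite cards0.
    apply: leq_trans (leq_card_setU _ _).1 _; apply: leq_add hx.
    exact: leq_imset_card.
  have cd : #|[set S : {set 'I_n} | #|S| == r]| = 'C(n, r)
    by rewrite card_draws card_ord.
  rewrite -cd -sum_nat_const.
  by apply: eq_leq; apply: eq_bigl => S; rewrite inE.
have covC : subspace_covering r rho C.
  apply/and3P; split.
  - apply/subsetP => D /bigcupP [S /eqP cS /imsetP [X _ ->]].
    by rewrite inE /is_subspace_mx genmx_id eqxx mxrank_gen (@rank_Mw F n x0 r S cS X) /=.
  - have /existsP [X0 /andP [XR _]] := forallP covR 0%R.
    have : 0 < #|[set S : {set 'I_n} | #|S| == r]| by rewrite card_draws card_ord bin_gt0.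
    case/card_gt0P => S; rewrite inE => cS.
    apply/set0Pn; exists <<Mw x0 S X0>>%MS; apply/bigcupP; exists S; first exact: cS.
    apply/imsetP; exists X0; [exact: XR | reflexivity].
  - apply/forallP => U; apply/implyP; rewrite inE => /andP [_ /eqP rkU].
    have [S [cS [Y hY]]] := cover_U x0 rkU.
    have /existsP [X /andP [XR hX]] := forallP covR Y.
    apply/existsP; exists <<Mw x0 S X>>%MS; apply/andP; split.
      apply/bigcupP; exists S; first by apply/eqP.
      apply/imsetP; exists X; [exact: XR | reflexivity].
    exact: leq_trans (dI_bound X rkU cS hY) hX.
apply: leq_trans (bigmin_le _ _ covC) _.
apply: leq_trans cardC _; exact: leq_mul.
Qed.
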